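(* Let $\alpha\in(0,1]$ and let $n$ be such that $n^\alpha=2^q$ for a positive integer $q$. Let $G_m$ be a planar 3-tree with $m\in\mathbb{N}$ vertices, given with a combinatorial (plane) embedding whose outer face has vertices $u,v,z$. Let $p_1,p_2,p_3\in B_n$ be points such that one of them has strictly largest $y$-coordinate, and let $R\subseteq\Box(\Delta(p_1,p_2,p_3))$ be an open axis-aligned rectangle with $w(R)h(R)>8m^2n^\alpha$, $w(R)>2m$ and $h(R)>m$. Then $G_m$ admits a planar straight-line embedding in which $u,v,z$ are mapped to $\tau(p_1),\tau(p_2),\tau(p_3)$, respectively, and every interior vertex of $G_m$ is mapped to a point $\tau(p)$ with $p\in B_n\cap R$.
   Context: A planar 3-tree is obtained from a triangle by repeatedly inserting a new vertex into a triangular face and joining it to the three vertices of that face. Let $A_n=\{(i,j)\in\mathbb{Z}^2: 0\le i,j\le 14n\}$. The sparse grid $B_n\subseteq A_n$ is the set of points of $A_n$ of at least one of the following forms: (1) $(i,j)$ with $n^\alpha \mid ij$; (2) $(i+k,j+k)$ with $n^\alpha\mid i$, $n^\alpha\mid j$, $k\in\{1,\dots,n^\alpha\}$; (3) $(i+k,j-k)$ with $n^\alpha\mid i$, $n^\alpha\mid j$, $k\in\{1,\dots,n^\alpha\}$. Let $\tau:\mathbb{R}^2\to\mathbb{R}^2$, $\tau(x,y)=(x,(28n)^y)$. For three points of $A_n$, relabel them (if necessary) as $(a_1,b_1),(a_2,b_2),(a_3,b_3)$ so that $\max(b_1,b_2)<b_3$, and define the open rectangle $\Box(\Delta)=(\min(a_1,a_2),\max(a_1,a_2))\times(\max(b_1,b_2),b_3)$.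 For an open rectangle $R=(x_1,x_2)\times(y_1,y_2)$, $w(R)=x_2-x_1$ and $h(R)=y_2-y_1$. A planar straight-line embedding maps vertices to distinct points and edges to pairwise non-crossing straight segments. *)

(* Defs.v *)
From Stdlib Require Import Reals ZArith List.
Open Scope R_scope.

(* A stacking tree: Leaf = an empty triangular face; Node t1 t2 t3 = a new
   vertex inserted into the face, splitting it into three faces filled by
   t1, t2, t3. *)
Inductive stack : Type :=
| Leaf : stack
| Node : stack -> stack -> stack -> stack.

Fixpoint nins (t : stack) : nat :=
  match t with
  | Leaf => 0
  | Node t1 t2 t3 => S (nins t1 + nins t2 + nins t3)
  end.

Definition nverts (t : stack) : nat := 3 + nins t.

(* edges created when filling face (a,b,c) with t, fresh labels from k *)
Fixpoint st_edges (t : stack) (a b c k : nat) : list (nat * nat) :=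
  match t with
  | Leaf => nil
  | Node t1 t2 t3 =>
      (k, a) :: (k, b) :: (k, c) ::
      (st_edges t1 a b k (k + 1)
       ++ st_edges t2 b c k (k + 1 + nins t1)
       ++ st_edges t3 a c k (k + 1 + nins t1 + nins t2))
  end.

(* The planar 3-tree G(t): vertices 0 .. nverts t - 1; the outer face is the
   triangle on vertices 0 (= u), 1 (= v), 2 (= z); vertices >= 3 are the
   interior vertices. *)
Definition p3t_edges (t : stack) : list (nat * nat) :=
  (0, 1)%nat :: (1, 2)%nat :: (0, 2)%nat :: st_edges t 0 1 2 3.

Definition pt := (R * R)%type.

Definition on_seg (p q r : pt) : Prop :=
  exists s : R, 0 <= s <= 1 /\
    fst r = (1 - s) * fst p + s * fst q /\
    snd r = (1 - s) * snd p + s * snd q.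

Definition straight_line_planar (N : nat) (E : list (nat * nat))
  (pos : nat -> pt) : Prop :=
  (forall i j, (i < N)%nat -> (j < N)%nat -> pos i = pos j -> i = j) /\
  (forall a b w, In (a, b) E -> (w < N)%nat -> w <> a -> w <> b ->
      ~ on_seg (pos a) (pos b) (pos w)) /\
  (forall a b c d, In (a, b) E -> In (c, d) E ->
      ~ (a = c /\ b = d) -> ~ (a = d /\ b = c) ->
      forall r, on_seg (pos a) (pos b) r -> on_seg (pos c) (pos d) r ->
        (r = pos a /\ (a = c \/ a = d)) \/ (r = pos b /\ (b = c \/ b = d))).

(* N plays the role of n^alpha (an integer). *)
Definition inA (n : nat) (p : Z * Z) : Prop :=
  (0 <= fst p <= 14 * Z.of_nat n)%Z /\ (0 <= snd p <= 14 * Z.of_nat n)%Z.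

Definition inB (n N : nat) (p : Z * Z) : Prop :=
  inA n p /\
  ( (Z.of_nat N | fst p * snd p)%Z
  \/ (exists i j k : Z, (Z.of_nat N | i)%Z /\ (Z.of_nat N | j)%Z /\
        (1 <= k <= Z.of_nat N)%Z /\ p = (i + k, j + k)%Z)
  \/ (exists i j k : Z, (Z.of_nat N | i)%Z /\ (Z.of_nat N | j)%Z /\
        (1 <= k <= Z.of_nat N)%Z /\ p = (i + k, j - k)%Z)).

Definition tau (n : nat) (p : Z * Z) : pt :=
  (IZR (fst p), powerRZ (INR (28 * n)) (snd p)).

Definition in_open_rect (x1 x2 y1 y2 : R) (r : pt) : Prop :=
  x1 < fst r < x2 /\ y1 < snd r < y2.

Definition box_top (p1 p2 p3 : Z * Z) (r : pt) : Prop :=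
  (Z.max (snd p1) (snd p2) < snd p3)%Z /\
  in_open_rect (IZR (Z.min (fst p1) (fst p2))) (IZR (Z.max (fst p1) (fst p2)))
               (IZR (Z.max (snd p1) (snd p2))) (IZR (snd p3)) r.

(* Box(Delta(p1,p2,p3)) after relabelling so the highest point is last *)
Definition in_box (p1 p2 p3 : Z * Z) (r : pt) : Prop :=
  box_top p1 p2 p3 r \/ box_top p2 p3 p1 r \/ box_top p1 p3 p2 r.

Definition has_strict_top (p1 p2 p3 : Z * Z) : Prop :=
  (Z.max (snd p1) (snd p2) < snd p3)%Z \/
  (Z.max (snd p2) (snd p3) < snd p1)%Z \/
  (Z.max (snd p1) (snd p3) < snd p2)%Z.

Definition IZpt (p : Z * Z) : pt := (IZR (fst p), IZR (snd p)).

(* Main.v *)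
Require Import Defs.
From Stdlib Require Import Reals ZArith List.
From Stdlib Require Import Lia Lra Psatz Classical.
Open Scope R_scope.

Open Scope R_scope.

Definition o (P Q X : pt) : R :=
  (fst Q - fst P) * (snd X - snd P) - (snd Q - snd P) * (fst X - fst P).

Lemma o_cyc P Q X : o P Q X = o Q X P.
Proof. unfold o; ring. Qed.
Lemma o_swap P Q X : o P Q X = - o Q P X.
Proof. unfold o; ring. Qed.
Lemma o_sum P Q R0 X : o P Q X + o Q R0 X + o R0 P X = o P Q R0.
Proof. unfold o; ring. Qed.
Lemma o_PPX P X : o P P X = 0.
Proof. unfold o; ring. Qed.
Lemma o_PQP P Q : o P Q P = 0.
Proof. unfold o; ring. Qed.
Lemma o_PQQ P Q : o P Q Q = 0.
Proof. unfold o; ring. Qed.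
Lemma cramer A B K P U W :
  o A B K * o U W P = o B K P * o U W A + o K A P * o U W B + o A B P * o U W K.
Proof. unfold o; ring. Qed.

Lemma on_seg_sym P Q r : on_seg P Q r -> on_seg Q P r.
Proof.
  intros [s [Hs [H1 H2]]]. exists (1 - s). split; [lra|]. split; [rewrite H1|rewrite H2]; ring.
Qed.

Lemma on_seg_aff P Q r : on_seg P Q r ->
  exists s, 0 <= s <= 1 /\ (forall U W, o U W r = (1 - s) * o U W P + s * o U W Q)
   /\ (s = 0 -> r = P) /\ (s = 1 -> r = Q).
Proof.
  intros [s [Hs [H1 H2]]]. exists s. split; [lra|]. split.
  - intros U W. unfold o. rewrite H1, H2. ring.
  - split; intros ->; destruct r, P, Q; simpl in *; f_equal; lra.
Qed.

Lemma on_seg_o P Q r : on_seg P Q r -> o P Q r = 0.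
Proof.
  intros H. destruct (on_seg_aff _ _ _ H) as [s [_ [E _]]]. rewrite E, o_PQP, o_PQQ. ring.
Qed.

Lemma common P Q R0 r : on_seg P Q r -> on_seg Q R0 r -> o P Q R0 <> 0 -> r = Q.
Proof.
  intros H1 H2 Hn. destruct (on_seg_aff _ _ _ H2) as [t [Ht [E [E0 _]]]].
  apply E0. pose proof (on_seg_o _ _ _ H1) as Z. rewrite E, o_PQQ in Z.
  assert (t * o P Q R0 = 0) by lra.
  destruct (Rmult_integral _ _ H) as [|]; [auto|contradiction].
Qed.

Definition sgn (s : R) := s = 1 \/ s = -1.
Definition inside_s (s : R) P Q R0 X :=
  0 < s * o P Q X /\ 0 < s * o Q R0 X /\ 0 < s * o R0 P X.
Definition inside P Q R0 X := exists s, sgn s /\ inside_s s P Q R0 X.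

Lemma inside_sign P Q R0 X s : inside P Q R0 X -> sgn s -> 0 < s * o P Q R0 ->
  inside_s s P Q R0 X.
Proof.
  intros [s' [Hs' [H1 [H2 H3]]]] Hs Ho. pose proof (o_sum P Q R0 X) as E.
  unfold inside_s. destruct Hs as [->| ->], Hs' as [->| ->]; lra.
Qed.

Lemma inside_tri_sign P Q R0 X : inside P Q R0 X ->
  exists s, sgn s /\ 0 < s * o P Q R0 /\ inside_s s P Q R0 X.
Proof.
  intros [s [Hs H]]. exists s. split; [auto|]. split; [|auto].
  destruct H as [H1 [H2 H3]]. pose proof (o_sum P Q R0 X) as E.
  destruct Hs as [->| ->]; lra.
Qed.

Lemma inside_nondeg P Q R0 X : inside P Q R0 X -> o P Q R0 <> 0.
Proof.
  intros H. destruct (inside_tri_sign _ _ _ _ H) as [s [_ [H1 _]]]. intro E; rewrite E in H1; lra.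
Qed.

Lemma inside_cyc P Q R0 X : inside P Q R0 X -> inside Q R0 P X.
Proof. intros [s [Hs [H1 [H2 H3]]]]. exists s. split; [auto|]. split; [|split]; auto. Qed.

Lemma inside_swap P Q R0 X : inside P Q R0 X -> inside Q P R0 X.
Proof.
  intros [s [Hs [H1 [H2 H3]]]]. exists (-s). split.
  { destruct Hs as [->| ->]; [right|left]; ring. }
  unfold inside_s. rewrite (o_swap Q P X), (o_swap P R0 X), (o_swap R0 Q X).
  split; [|split]; lra.
Qed.

Lemma inside_trans A B C K P : inside A B C K -> inside A B K P -> inside A B C P.
Proof.
  intros H1 H2. destruct (inside_tri_sign _ _ _ _ H1) as [s [Hs [Ho [K1 [K2 K3]]]]].
  pose proof (inside_sign _ _ _ _ s H2 Hs K1) as [P1 [P2 P3]].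
  exists s. split; [auto|]. split; [auto|].
  pose proof (cramer A B K P B C) as E1. rewrite o_PQP in E1.
  pose proof (cramer A B K P C A) as E2. rewrite o_PQQ in E2.
  rewrite <- (o_cyc A B C) in E1. rewrite (o_cyc C A B) in E2.
  destruct Hs as [->| ->]; split; nra.
Qed.

Open Scope R_scope.

Definition concl (pos : nat -> pt) (a b c d : nat) (r : pt) :=
  (r = pos a /\ (a = c \/ a = d)) \/ (r = pos b /\ (b = c \/ b = d)).

Definition Good (E : nat -> nat -> Prop) (V : nat -> Prop) (pos : nat -> pt) :=
  (forall i j, V i -> V j -> pos i = pos j -> i = j) /\
  (forall a b w, E a b -> V w -> w <> a -> w <> b -> ~ on_seg (pos a) (pos b) (pos w)) /\
  (forall a b c d, E a b -> E c d -> ~ (a = c /\ b = d) -> ~ (a = d /\ b = c) ->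
     forall r, on_seg (pos a) (pos b) r -> on_seg (pos c) (pos d) r -> concl pos a b c d r).

Definition WF (E : nat -> nat -> Prop) (V : nat -> Prop) :=
  forall a b, E a b -> V a /\ V b /\ a <> b.

Definition Sep (s : R) (u w : nat) (V1 V2 : nat -> Prop) (pos : nat -> pt) :=
  pos u <> pos w /\ V1 u /\ V1 w /\ V2 u /\ V2 w /\
  (forall x, V1 x -> 0 <= s * o (pos u) (pos w) (pos x) /\
      (s * o (pos u) (pos w) (pos x) = 0 -> x = u \/ x = w)) /\
  (forall x, V2 x -> s * o (pos u) (pos w) (pos x) <= 0 /\
      (s * o (pos u) (pos w) (pos x) = 0 -> x = u \/ x = w)).

Lemma Sep_flip s u w V1 V2 pos : Sep s u w V1 V2 pos -> Sep (-s) u w V2 V1 pos.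
Proof.
  intros [H0 [H1 [H2 [H3 [H4 [H5 H6]]]]]].
  split; [auto|]. split; [auto|]. split; [auto|]. split; [auto|]. split; [auto|].
  split.
  - intros y Hy. destruct (H6 y Hy) as [A B]. split; [lra|]. intros E. apply B. lra.
  - intros y Hy. destruct (H5 y Hy) as [A B]. split; [lra|]. intros E. apply B. lra.
Qed.

Definition Cross E1 V1 E2 V2 (pos : nat -> pt) :=
  (forall i j, V1 i -> V2 j -> pos i = pos j -> i = j) /\
  (forall a b w, E1 a b -> V2 w -> w <> a -> w <> b -> ~ on_seg (pos a) (pos b) (pos w)) /\
  (forall a b c d, E1 a b -> E2 c d -> ~ (a = c /\ b = d) -> ~ (a = d /\ b = c) ->
     forall r, on_seg (pos a) (pos b) r -> on_seg (pos c) (pos d) r -> concl pos a b c d r).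

Lemma seg_ge (U W P Q r : pt) s : on_seg P Q r -> 0 <= s * o U W P -> 0 <= s * o U W Q ->
  0 <= s * o U W r.
Proof.
  intros H HP HQ. destruct (on_seg_aff _ _ _ H) as [t [Ht [E _]]]. rewrite E. nra.
Qed.

Lemma seg_cases (U W P Q r : pt) s : on_seg P Q r -> 0 <= s * o U W P -> 0 <= s * o U W Q ->
  s * o U W r <= 0 ->
  (r = P /\ s * o U W P = 0) \/ (r = Q /\ s * o U W Q = 0) \/
  (s * o U W P = 0 /\ s * o U W Q = 0).
Proof.
  intros H HP HQ Hr. destruct (on_seg_aff _ _ _ H) as [t [Ht [E [E0 E1]]]].
  rewrite E in Hr.
  destruct (Req_dec t 0) as [->|N0].
  { left. split; [auto|]. nra. }
  destruct (Req_dec t 1) as [->|N1].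
  { right; left. split; [auto|]. nra. }
  right; right. split; nra.
Qed.

Lemma cross_of_sep E1 V1 E2 V2 pos s u w :
  WF E1 V1 -> WF E2 V2 -> Good E1 V1 pos -> Sep s u w V1 V2 pos -> Cross E1 V1 E2 V2 pos.
Proof.
  intros W1 W2 [G1 [G2 G3]] [Huw [U1 [W1' [U2 [W2' [S1 S2]]]]]].
  set (F := fun X => s * o (pos u) (pos w) X) in *.
  assert (Zeq : forall x y, (x = u \/ x = w) -> (y = u \/ y = w) -> pos x = pos y -> x = y).
  { intros x y [->| ->] [->| ->] E; auto; exfalso; apply Huw; congruence. }
  split; [|split].
  - intros i j Hi Hj E. destruct (S1 i Hi) as [Ai Bi]. destruct (S2 j Hj) as [Aj Bj].
    rewrite E in Ai, Bi. apply Zeq; [apply Bi|apply Bj|auto]; lra.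
  - intros a b x Hab Hx Na Nb Hon.
    destruct (classic (V1 x)) as [Hx1|Hx1].
    + exact (G2 a b x Hab Hx1 Na Nb Hon).
    + destruct (W1 a b Hab) as [Va [Vb _]].
      destruct (S2 x Hx) as [Ax Bx].
      assert (s * o (pos u) (pos w) (pos x) <> 0).
      { intro Z. destruct (Bx Z) as [->| ->]; contradiction. }
      pose proof (seg_ge (pos u) (pos w) _ _ _ s Hon (proj1 (S1 a Va)) (proj1 (S1 b Vb))).
      lra.
  - intros a b c d Hab Hcd N1 N2 r Hr1 Hr2.
    destruct (W1 a b Hab) as [Va [Vb Nab]]. destruct (W2 c d Hcd) as [Vc [Vd Ncd]].
    destruct (S1 a Va) as [Aa Ba]. destruct (S1 b Vb) as [Ab Bb].
    destruct (S2 c Vc) as [Ac Bc]. destruct (S2 d Vd) as [Ad Bd].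
    assert (Hle : s * o (pos u) (pos w) r <= 0).
    { pose proof (seg_ge (pos u) (pos w) _ _ _ (-s) Hr2) as T. lra. }
    assert (Hge : -s * o (pos u) (pos w) r <= 0).
    { pose proof (seg_ge (pos u) (pos w) _ _ _ s Hr1 Aa Ab) as T. lra. }
    assert (HA : (r = pos a /\ (a = u \/ a = w)) \/ (r = pos b /\ (b = u \/ b = w)) \/
                 ((a = u \/ a = w) /\ (b = u \/ b = w))).
    { destruct (seg_cases _ _ _ _ _ s Hr1 Aa Ab Hle) as [[Ra Za]|[[Rb Zb]|[Za Zb]]].
      - left. auto.
      - right; left. auto.
      - right; right. auto. }
    assert (HC : (r = pos c /\ (c = u \/ c = w)) \/ (r = pos d /\ (d = u \/ d = w)) \/
                 ((c = u \/ c = w) /\ (d = u \/ d = w))).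
    { destruct (seg_cases (pos u) (pos w) (pos c) (pos d) r (-s) Hr2 ltac:(lra) ltac:(lra) Hge) as [[Ra Za]|[[Rb Zb]|[Za Zb]]].
      - left. split; [auto|]. apply Bc. lra.
      - right; left. split; [auto|]. apply Bd. lra.
      - right; right. split; [apply Bc|apply Bd]; lra. }
    clear - HA HC Huw Nab Ncd N1 N2. unfold concl.
    destruct HA as [[Ra [-> | ->]]|[[Rb [-> | ->]]|[[-> | ->] [-> | ->]]]];
    destruct HC as [[Rc [-> | ->]]|[[Rd [-> | ->]]|[[-> | ->] [-> | ->]]]];
    subst; try congruence; try tauto;
    try (exfalso; apply Huw; congruence).
Qed.

Open Scope R_scope.

Lemma union3 E1 V1 E2 V2 E3 V3 (E : nat -> nat -> Prop) (V : nat -> Prop) pos :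
  Good E1 V1 pos -> Good E2 V2 pos -> Good E3 V3 pos ->
  Cross E1 V1 E2 V2 pos -> Cross E2 V2 E1 V1 pos -> Cross E1 V1 E3 V3 pos ->
  Cross E3 V3 E1 V1 pos -> Cross E2 V2 E3 V3 pos -> Cross E3 V3 E2 V2 pos ->
  (forall x, V x -> V1 x \/ V2 x \/ V3 x) ->
  (forall x y, E x y -> E1 x y \/ E2 x y \/ E3 x y) -> Good E V pos.
Proof.
  intros G1 G2 G3 C12 C21 C13 C31 C23 C32 HV HE.
  split; [|split].
  - intros i j Hi Hj Eq. destruct (HV i Hi) as [Hi'|[Hi'|Hi']]; destruct (HV j Hj) as [Hj'|[Hj'|Hj']].
    all: first [ exact (proj1 G1 i j Hi' Hj' Eq) | exact (proj1 G2 i j Hi' Hj' Eq)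
               | exact (proj1 G3 i j Hi' Hj' Eq)
               | exact (proj1 C12 i j Hi' Hj' Eq) | exact (proj1 C21 i j Hi' Hj' Eq)
               | exact (proj1 C13 i j Hi' Hj' Eq) | exact (proj1 C31 i j Hi' Hj' Eq)
               | exact (proj1 C23 i j Hi' Hj' Eq) | exact (proj1 C32 i j Hi' Hj' Eq) ].
  - intros a b w Hab Hw. destruct (HE a b Hab) as [H|[H|H]]; destruct (HV w Hw) as [Hw'|[Hw'|Hw']].
    all: first [ exact (proj1 (proj2 G1) a b w H Hw') | exact (proj1 (proj2 G2) a b w H Hw')
               | exact (proj1 (proj2 G3) a b w H Hw')
               | exact (proj1 (proj2 C12) a b w H Hw') | exact (proj1 (proj2 C21) a b w H Hw')
               | exact (proj1 (proj2 C13) a b w H Hw') | exact (proj1 (proj2 C31) a b w H Hw')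
               | exact (proj1 (proj2 C23) a b w H Hw') | exact (proj1 (proj2 C32) a b w H Hw') ].
  - intros a b c d Hab Hcd. destruct (HE a b Hab) as [H|[H|H]]; destruct (HE c d Hcd) as [H'|[H'|H']].
    all: first [ exact (proj2 (proj2 G1) a b c d H H') | exact (proj2 (proj2 G2) a b c d H H')
               | exact (proj2 (proj2 G3) a b c d H H')
               | exact (proj2 (proj2 C12) a b c d H H') | exact (proj2 (proj2 C21) a b c d H H')
               | exact (proj2 (proj2 C13) a b c d H H') | exact (proj2 (proj2 C31) a b c d H H')
               | exact (proj2 (proj2 C23) a b c d H H') | exact (proj2 (proj2 C32) a b c d H H') ].
Qed.

Definition tri (a b c x y : nat) : Prop :=
  (x = a /\ y = b) \/ (x = b /\ y = a) \/ (x = b /\ y = c) \/ (x = c /\ y = b) \/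
  (x = a /\ y = c) \/ (x = c /\ y = a).

Lemma o_nz_perms P Q R0 : o P Q R0 <> 0 ->
  o P Q R0 <> 0 /\ o Q R0 P <> 0 /\ o R0 P Q <> 0 /\ o Q P R0 <> 0 /\ o P R0 Q <> 0 /\ o R0 Q P <> 0.
Proof.
  intros H.
  pose proof (o_cyc P Q R0). pose proof (o_cyc Q R0 P).
  pose proof (o_swap Q P R0). pose proof (o_swap P R0 Q). pose proof (o_swap R0 Q P).
  repeat split; intro E; apply H; lra.
Qed.

Lemma leaf_good a b c pos : a <> b -> b <> c -> a <> c ->
  o (pos a) (pos b) (pos c) <> 0 ->
  Good (tri a b c) (fun x => x = a \/ x = b \/ x = c) pos.
Proof.
  intros Nab Nbc Nac Hn.
  destruct (o_nz_perms _ _ _ Hn) as [O1 [O2 [O3 [O4 [O5 O6]]]]].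
  split; [|split].
  - intros i j [-> | [-> | ->] ] [-> | [-> | ->] ] E; auto; exfalso; rewrite E in *;
      repeat rewrite o_PPX in *; repeat rewrite o_PQP in *; repeat rewrite o_PQQ in *; lra.
  - intros x y w Hxy [-> | [-> | ->] ] N1 N2 Hon; apply on_seg_o in Hon;
    unfold tri in Hxy;
    destruct Hxy as [[-> ->]|[[-> ->]|[[-> ->]|[[-> ->]|[[-> ->]|[-> ->]]]]]];
    try congruence; lra.
  - intros x y z w Hxy Hzw N1 N2 r H1 H2. unfold tri in Hxy, Hzw. unfold concl.
    destruct Hxy as [[-> ->]|[[-> ->]|[[-> ->]|[[-> ->]|[[-> ->]|[-> ->]]]]]];
    destruct Hzw as [[-> ->]|[[-> ->]|[[-> ->]|[[-> ->]|[[-> ->]|[-> ->]]]]]];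
    try tauto;
    first
      [ left; split; [|tauto];
        eapply common; [apply on_seg_sym; exact H1 | first [exact H2 | apply on_seg_sym; exact H2] | assumption]
      | right; split; [|tauto];
        eapply common; [exact H1 | first [exact H2 | apply on_seg_sym; exact H2] | assumption] ].
Qed.

Lemma sep_gen s u w xl yl (V1 V2 : nat -> Prop) pos :
  sgn s -> 0 < s * o (pos xl) (pos u) (pos w) -> 0 < s * o (pos yl) (pos w) (pos u) ->
  (forall x, V1 x -> x = xl \/ x = u \/ x = w \/ inside (pos xl) (pos u) (pos w) (pos x)) ->
  (forall x, V2 x -> x = yl \/ x = u \/ x = w \/ inside (pos yl) (pos w) (pos u) (pos x)) ->
  V1 u -> V1 w -> V2 u -> V2 w -> Sep s u w V1 V2 pos.
Proof.
  intros Hs HX HY H1 H2 U1 W1 U2 W2.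
  assert (EX : o (pos u) (pos w) (pos xl) = o (pos xl) (pos u) (pos w)) by (symmetry; apply o_cyc).
  assert (EY : o (pos u) (pos w) (pos yl) = - o (pos yl) (pos w) (pos u)).
  { rewrite (o_cyc (pos yl)). rewrite o_swap. ring. }
  split.
  { intro E. rewrite E, o_PQQ in HX. lra. }
  do 4 (split; [auto|]). split.
  - intros x Hx. destruct (H1 x Hx) as [->|[->|[->|Hin]]].
    + rewrite EX. split; [lra|]. intro; lra.
    + rewrite o_PQP. split; [lra|auto].
    + rewrite o_PQQ. split; [lra|auto].
    + destruct (inside_sign _ _ _ _ s Hin Hs HX) as [_ [A _]]. split; [lra|]. intro; lra.
  - intros x Hx. destruct (H2 x Hx) as [->|[->|[->|Hin]]].
    + rewrite EY. split; [lra|]. intro; lra.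
    + rewrite o_PQP. split; [lra|auto].
    + rewrite o_PQQ. split; [lra|auto].
    + destruct (inside_sign _ _ _ _ s Hin Hs HY) as [_ [A _]].
      rewrite o_swap. split; [lra|]. intro; lra.
Qed.

Open Scope R_scope.

Fixpoint EdS (t : stack) (a b c k : nat) : nat -> nat -> Prop :=
  match t with
  | Leaf => tri a b c
  | Node t1 t2 t3 => fun x y =>
      EdS t1 a b k (k + 1) x y \/ EdS t2 b c k (k + 1 + nins t1) x y \/
      EdS t3 a c k (k + 1 + nins t1 + nins t2) x y
  end.

Definition VS (t : stack) (a b c k : nat) (x : nat) : Prop :=
  x = a \/ x = b \/ x = c \/ (k <= x < k + nins t)%nat.

Lemma tri_in_EdS t : forall a b c k x y, tri a b c x y -> EdS t a b c k x y.
Proof.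
  induction t as [|t1 IH1 t2 IH2 t3 IH3]; intros a b c k x y H; simpl; auto.
  unfold tri in H.
  destruct H as [[-> ->]|[[-> ->]|[[-> ->]|[[-> ->]|[[-> ->]|[-> ->]]]]]].
  - left. apply IH1. unfold tri; tauto.
  - left. apply IH1. unfold tri; tauto.
  - right; left. apply IH2. unfold tri; tauto.
  - right; left. apply IH2. unfold tri; tauto.
  - right; right. apply IH3. unfold tri; tauto.
  - right; right. apply IH3. unfold tri; tauto.
Qed.

Lemma st_in_EdS t : forall a b c k x y, In (x, y) (st_edges t a b c k) -> EdS t a b c k x y.
Proof.
  induction t as [|t1 IH1 t2 IH2 t3 IH3]; intros a b c k x y H; simpl in H.
  - contradiction.
  - simpl. destruct H as [E|[E|[E|H]]].
    + inversion E; subst. left. apply tri_in_EdS. unfold tri; tauto.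
    + inversion E; subst. left. apply tri_in_EdS. unfold tri; tauto.
    + inversion E; subst. right; left. apply tri_in_EdS. unfold tri; tauto.
    + apply in_app_or in H. destruct H as [H|H].
      * left. apply IH1; auto.
      * apply in_app_or in H. destruct H as [H|H].
        -- right; left. apply IH2; auto.
        -- right; right. apply IH3; auto.
Qed.

Lemma WF_EdS t : forall a b c k, a <> b -> b <> c -> a <> c ->
  (a < k)%nat -> (b < k)%nat -> (c < k)%nat -> WF (EdS t a b c k) (VS t a b c k).
Proof.
  induction t as [|t1 IH1 t2 IH2 t3 IH3]; intros a b c k Nab Nbc Nac Ha Hb Hc x y H; simpl in H.
  - unfold VS. unfold tri in H.
    destruct H as [[-> ->]|[[-> ->]|[[-> ->]|[[-> ->]|[[-> ->]|[-> ->]]]]]]; intuition.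
  - unfold VS; simpl.
    destruct H as [H|[H|H]].
    + destruct (IH1 a b k ((k+1)%nat) ltac:(lia) ltac:(lia) ltac:(lia) ltac:(lia) ltac:(lia) ltac:(lia) x y H)
        as [A [B C]]. unfold VS in A, B. lia.
    + destruct (IH2 b c k ((k+1+nins t1)%nat) ltac:(lia) ltac:(lia) ltac:(lia) ltac:(lia) ltac:(lia) ltac:(lia) x y H)
        as [A [B C]]. unfold VS in A, B. lia.
    + destruct (IH3 a c k ((k+1+nins t1+nins t2)%nat) ltac:(lia) ltac:(lia) ltac:(lia) ltac:(lia) ltac:(lia) ltac:(lia) x y H)
        as [A [B C]]. unfold VS in A, B. lia.
Qed.

Fixpoint Placed (t : stack) (a b c k : nat) (pos : nat -> pt) : Prop :=
  match t with
  | Leaf => True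
  | Node t1 t2 t3 =>
      inside (pos a) (pos b) (pos c) (pos k) /\
      Placed t1 a b k (k + 1) pos /\ Placed t2 b c k (k + 1 + nins t1) pos /\
      Placed t3 a c k (k + 1 + nins t1 + nins t2) pos
  end.

Lemma range_inside t : forall a b c k pos, Placed t a b c k pos ->
  forall w, (k <= w < k + nins t)%nat -> inside (pos a) (pos b) (pos c) (pos w).
Proof.
  induction t as [|t1 IH1 t2 IH2 t3 IH3]; intros a b c k pos H w Hw; simpl in *.
  - lia.
  - destruct H as [HK [P1 [P2 P3]]].
    destruct (Nat.eq_dec w k) as [->|Nk]; [auto|].
    destruct (le_lt_dec (k + 1 + nins t1) w) as [L1|L1].
    + destruct (le_lt_dec (k + 1 + nins t1 + nins t2) w) as [L2|L2].
      * pose proof (IH3 _ _ _ _ _ P3 w ltac:(lia)) as I.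
        assert (HK' : inside (pos a) (pos c) (pos b) (pos k)).
        { apply inside_cyc. apply inside_swap. auto. }
        pose proof (inside_trans _ _ _ _ _ HK' I) as J.
        apply inside_cyc. apply inside_swap. auto.
      * pose proof (IH2 _ _ _ _ _ P2 w ltac:(lia)) as I.
        pose proof (inside_trans _ _ _ _ _ (inside_cyc _ _ _ _ HK) I) as J.
        apply inside_cyc. apply inside_cyc. auto.
    + pose proof (IH1 _ _ _ _ _ P1 w ltac:(lia)) as I.
      exact (inside_trans _ _ _ _ _ HK I).
Qed.

Lemma Good_mono E V V' pos : (forall x, V x -> V' x) -> Good E V' pos -> Good E V pos.
Proof.
  intros HV [G1 [G2 G3]]. split; [|split].
  - intros i j Hi Hj. apply G1; auto.
  - intros a b w Hab Hw. apply G2; auto.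
  - exact G3.
Qed.

Lemma good_main t : forall a b c k pos, a <> b -> b <> c -> a <> c ->
  (a < k)%nat -> (b < k)%nat -> (c < k)%nat ->
  o (pos a) (pos b) (pos c) <> 0 -> Placed t a b c k pos ->
  Good (EdS t a b c k) (VS t a b c k) pos.
Proof.
  induction t as [|t1 IH1 t2 IH2 t3 IH3]; intros a b c k pos Nab Nbc Nac Ha Hb Hc Hn HP.
  - simpl. eapply Good_mono; [|apply leaf_good; eauto]. unfold VS; simpl. intros x Hx; lia.
  - simpl in HP. destruct HP as [HK [P1 [P2 P3]]].
    assert (Hs : exists s, sgn s /\ 0 < s * o (pos a) (pos b) (pos c)).
    { destruct (Rlt_or_le 0 (o (pos a) (pos b) (pos c))).
      - exists 1. split; [left; auto|lra].
      - exists (-1). split; [right; auto|]. lra. }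
    destruct Hs as [s [Hs Ho]].
    destruct (inside_sign _ _ _ _ s HK Hs Ho) as [K1 [K2 K3]].
    assert (N1 : o (pos a) (pos b) (pos k) <> 0) by (intro E; rewrite E in K1; lra).
    assert (N2 : o (pos b) (pos c) (pos k) <> 0) by (intro E; rewrite E in K2; lra).
    assert (N3 : o (pos a) (pos c) (pos k) <> 0).
    { pose proof (o_swap (pos a) (pos c) (pos k)) as E1. intro E.
      assert (o (pos c) (pos a) (pos k) = 0) by lra. rewrite H in K3; lra. }
    pose proof (IH1 a b k ((k+1)%nat) pos ltac:(lia) ltac:(lia) ltac:(lia) ltac:(lia) ltac:(lia) ltac:(lia) N1 P1) as G1.
    pose proof (IH2 b c k ((k+1+nins t1)%nat) pos ltac:(lia) ltac:(lia) ltac:(lia) ltac:(lia) ltac:(lia) ltac:(lia) N2 P2) as G2.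
    pose proof (IH3 a c k ((k+1+nins t1+nins t2)%nat) pos ltac:(lia) ltac:(lia) ltac:(lia) ltac:(lia) ltac:(lia) ltac:(lia) N3 P3) as G3.
    pose proof (WF_EdS t1 a b k ((k+1)%nat) ltac:(lia) ltac:(lia) ltac:(lia) ltac:(lia) ltac:(lia) ltac:(lia)) as W1.
    pose proof (WF_EdS t2 b c k ((k+1+nins t1)%nat) ltac:(lia) ltac:(lia) ltac:(lia) ltac:(lia) ltac:(lia) ltac:(lia)) as W2.
    pose proof (WF_EdS t3 a c k ((k+1+nins t1+nins t2)%nat) ltac:(lia) ltac:(lia) ltac:(lia) ltac:(lia) ltac:(lia) ltac:(lia)) as W3.
    pose proof (range_inside _ _ _ _ _ _ P1) as R1.
    pose proof (range_inside _ _ _ _ _ _ P2) as R2.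
    pose proof (range_inside _ _ _ _ _ _ P3) as R3.
    assert (S12 : Sep s b k (VS t1 a b k ((k+1)%nat)) (VS t2 b c k ((k+1+nins t1)%nat)) pos).
    { apply (sep_gen s b k a c); auto.
      - rewrite <- o_cyc. auto.
      - intros x [->|[->|[->|Hx]]]; auto.
      - intros x [->|[->|[->|Hx]]]; auto. do 3 right. apply inside_cyc. auto.
      - unfold VS; auto.
      - unfold VS; auto.
      - unfold VS; auto.
      - unfold VS; auto. }
    assert (S13 : Sep (-s) a k (VS t1 a b k ((k+1)%nat)) (VS t3 a c k ((k+1+nins t1+nins t2)%nat)) pos).
    { apply (sep_gen (-s) a k b c).
      - destruct Hs as [->| ->]; [right|left]; ring.
      - rewrite o_swap. lra.
      - rewrite <- (o_cyc (pos a) (pos c) (pos k)), (o_swap (pos a) (pos c) (pos k)). lra.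
      - intros x [->|[->|[->|Hx]]]; auto. do 3 right. apply inside_swap. auto.
      - intros x [->|[->|[->|Hx]]]; auto. do 3 right. apply inside_cyc. auto.
      - unfold VS; auto.
      - unfold VS; auto.
      - unfold VS; auto.
      - unfold VS; auto. }
    assert (S23 : Sep s c k (VS t2 b c k ((k+1+nins t1)%nat)) (VS t3 a c k ((k+1+nins t1+nins t2)%nat)) pos).
    { apply (sep_gen s c k b a); auto.
      - rewrite <- o_cyc. auto.
      - intros x [->|[->|[->|Hx]]]; auto.
      - intros x [->|[->|[->|Hx]]]; auto. do 3 right. apply inside_cyc. apply inside_swap. auto.
      - unfold VS; auto.
      - unfold VS; auto.
      - unfold VS; auto.
      - unfold VS; auto. }
    apply (union3 _ _ _ _ _ _ _ _ pos G1 G2 G3).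
    + exact (cross_of_sep _ _ _ _ _ _ _ _ W1 W2 G1 S12).
    + exact (cross_of_sep _ _ _ _ _ _ _ _ W2 W1 G2 (Sep_flip _ _ _ _ _ _ S12)).
    + exact (cross_of_sep _ _ _ _ _ _ _ _ W1 W3 G1 S13).
    + exact (cross_of_sep _ _ _ _ _ _ _ _ W3 W1 G3 (Sep_flip _ _ _ _ _ _ S13)).
    + exact (cross_of_sep _ _ _ _ _ _ _ _ W2 W3 G2 S23).
    + exact (cross_of_sep _ _ _ _ _ _ _ _ W3 W2 G3 (Sep_flip _ _ _ _ _ _ S23)).
    + unfold VS; simpl. intros x Hx. lia.
    + simpl. auto.
Qed.

Open Scope R_scope.

Lemma real_core (x1 x2 x3 xk Y1 Y2 Y3 Yk M : R) :
  14 <= M -> 0 <= x1 <= M -> 0 <= x2 <= M -> 0 <= x3 <= M -> 0 <= xk <= M ->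
  x1 + 1 <= xk -> xk + 1 <= x2 -> 0 < Y1 -> 0 < Y2 ->
  2 * M * Y1 <= Yk -> 2 * M * Y2 <= Yk -> 2 * M * Yk <= Y3 ->
  inside_s 1 (x1, Y1) (x2, Y2) (x3, Y3) (xk, Yk).
Proof.
  intros HM H1 H2 H3 Hk L1 L2 P1 P2 B1 B2 B3.
  unfold inside_s, o; simpl.
  assert (Yk1 : 28 * Y1 <= Yk) by nra.
  assert (Yk2 : 28 * Y2 <= Yk) by nra.
  assert (PYk : 0 < Yk) by lra.
  assert (MY2 : M * Y2 <= Yk / 2) by lra.
  assert (MYk : M * Yk <= Y3 / 2) by lra.
  assert (MY1 : M * Y1 <= Yk / 2) by lra.
  assert (Yk3 : 28 * Yk <= Y3) by nra.
  split; [|split].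
  - assert (A1 : (x2 - x1 - 1) * (Yk - Y1) >= 0) by (apply Rle_ge, Rmult_le_pos; lra).
    assert (A2 : Y2 * (xk - x1) <= Y2 * M) by nra.
    assert (A3 : Y1 * (xk - x1) >= 0) by nra.
    lra.
  - assert (A1 : (x3 - x2 + M) * (Yk - Y2) >= 0) by (apply Rle_ge, Rmult_le_pos; lra).
    assert (A2 : (x2 - xk - 1) * (Y3 - Y2) >= 0) by (apply Rle_ge, Rmult_le_pos; lra).
    assert (A3 : M * Y2 >= 0) by nra.
    lra.
  - assert (A1 : (xk - x1 - 1) * Y3 >= 0) by nra.
    assert (A2 : (x1 - x3 + M) * Yk >= 0) by nra.
    assert (A3 : (x3 - xk + M) * Y1 >= 0) by nra.
    lra.
Qed.

Lemma real_nondeg (x1 x2 x3 Y1 Y2 Y3 M : R) :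
  14 <= M -> 0 <= x1 <= M -> 0 <= x2 <= M -> 0 <= x3 <= M ->
  x1 + 1 <= x2 -> 0 < Y1 -> 0 < Y2 ->
  2 * M * Y1 <= Y3 -> 2 * M * Y2 <= Y3 ->
  0 < o (x1, Y1) (x2, Y2) (x3, Y3).
Proof.
  intros HM H1 H2 H3 L P1 P2 B1 B2. unfold o; simpl.
  assert (MY1 : M * Y1 <= Y3 / 2) by lra.
  assert (MY2 : M * Y2 <= Y3 / 2) by lra.
  assert (Y28 : 28 * Y1 <= Y3) by nra.
  assert (A1 : (x2 - x1 - 1) * (Y3 - Y1) >= 0) by nra.
  assert (MY1' : M * Y1 >= Y1) by nra.
  assert (MY2' : M * Y2 >= 0) by nra.
  destruct (Rle_or_lt Y1 Y2).
  - assert (A2 : (Y2 - Y1) * (x3 - x1) <= (Y2 - Y1) * M) by nra.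
    lra.
  - assert (A2 : (Y2 - Y1) * (x3 - x1) <= (Y1 - Y2) * M) by nra.
    lra.
Qed.

Definition boxZ (L1 L2 T K : Z * Z) : Prop :=
  (Z.max (snd L1) (snd L2) < snd K < snd T)%Z /\
  (Z.min (fst L1) (fst L2) < fst K < Z.max (fst L1) (fst L2))%Z.

Definition InBoxZ (P1 P2 P3 K : Z * Z) : Prop :=
  boxZ P1 P2 P3 K \/ boxZ P2 P3 P1 K \/ boxZ P1 P3 P2 K.

Lemma INR28 n : INR (28 * n) = 28 * INR n.
Proof. rewrite mult_INR. f_equal. simpl. lra. Qed.

Lemma powerRZ_nat (D : R) (y : Z) : (0 <= y)%Z -> powerRZ D y = D ^ Z.to_nat y.
Proof. intros H. rewrite pow_powerRZ, Z2Nat.id; auto. Qed.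

Lemma pow_facts (D : R) (y y' : Z) : 1 <= D -> (0 <= y)%Z -> (y < y')%Z ->
  0 < powerRZ D y /\ D * powerRZ D y <= powerRZ D y'.
Proof.
  intros HD Hy Hyy. rewrite !powerRZ_nat by lia.
  split; [apply pow_lt; lra|].
  replace (Z.to_nat y') with (Z.to_nat y + S (Z.to_nat y' - Z.to_nat y - 1))%nat by lia.
  rewrite pow_add. simpl.
  pose proof (pow_R1_Rle D (Z.to_nat y' - Z.to_nat y - 1) HD).
  pose proof (pow_lt D (Z.to_nat y) ltac:(lra)).
  set (u := D ^ Z.to_nat y) in *. set (v := D ^ (Z.to_nat y' - Z.to_nat y - 1)) in *.
  assert (0 <= D * u) by (apply Rmult_le_pos; lra).
  assert (D * u * (v - 1) >= 0) by (apply Rle_ge, Rmult_le_pos; lra). nra.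
Qed.

Lemma IZR_bound n x : (0 <= x <= 14 * Z.of_nat n)%Z -> 0 <= IZR x <= 14 * INR n.
Proof.
  intros [H1 H2]. split; [apply IZR_le; auto|].
  rewrite INR_IZR_INZ. rewrite <- mult_IZR. apply IZR_le; auto.
Qed.

Lemma tau_inside_core n L1 L2 T K : (1 <= n)%nat ->
  inA n L1 -> inA n L2 -> inA n T -> inA n K -> boxZ L1 L2 T K ->
  (fst L1 < fst L2)%Z -> inside (tau n L1) (tau n L2) (tau n T) (tau n K).
Proof.
  intros Hn [A1 B1] [A2 B2] [A3 B3] [Ak Bk] [[Hy1 Hy2] [Hx1 Hx2]] Hlt.
  destruct L1 as [x1 y1], L2 as [x2 y2], T as [x3 y3], K as [xk yk]; cbn [fst snd] in *.
  assert (HnR : 1 <= INR n) by (apply (le_INR 1); auto).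
  set (D := INR (28 * n)).
  assert (HD : D = 2 * (14 * INR n)) by (unfold D; rewrite INR28; ring).
  assert (HD1 : 1 <= D) by lra.
  destruct (pow_facts D y1 yk HD1 ltac:(lia) ltac:(lia)) as [P1 Q1].
  destruct (pow_facts D y2 yk HD1 ltac:(lia) ltac:(lia)) as [P2 Q2].
  destruct (pow_facts D yk y3 HD1 ltac:(lia) ltac:(lia)) as [Pk Qk].
  exists 1. split; [left; auto|]. unfold tau; cbn [fst snd]. fold D.
  apply (real_core _ _ _ _ _ _ _ _ (14 * INR n)).
  all: try lra.
  all: try (apply IZR_bound; lia).
  all: try (rewrite <- HD; lra).
  all: try (rewrite <- plus_IZR; apply IZR_le; lia).
Qed.

Lemma tau_nondeg_core n L1 L2 T : (1 <= n)%nat ->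
  inA n L1 -> inA n L2 -> inA n T -> (Z.max (snd L1) (snd L2) < snd T)%Z ->
  (fst L1 < fst L2)%Z -> 0 < o (tau n L1) (tau n L2) (tau n T).
Proof.
  intros Hn [A1 B1] [A2 B2] [A3 B3] Hy Hlt.
  destruct L1 as [x1 y1], L2 as [x2 y2], T as [x3 y3]; cbn [fst snd] in *.
  assert (HnR : 1 <= INR n) by (apply (le_INR 1); auto).
  set (D := INR (28 * n)).
  assert (HD : D = 2 * (14 * INR n)) by (unfold D; rewrite INR28; ring).
  assert (HD1 : 1 <= D) by lra.
  destruct (pow_facts D y1 y3 HD1 ltac:(lia) ltac:(lia)) as [P1 Q1].
  destruct (pow_facts D y2 y3 HD1 ltac:(lia) ltac:(lia)) as [P2 Q2].
  unfold tau; cbn [fst snd]. fold D.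
  apply (real_nondeg _ _ _ _ _ _ (14 * INR n)).
  all: try lra.
  all: try (apply IZR_bound; lia).
  all: try (rewrite <- HD; lra).
  all: try (rewrite <- plus_IZR; apply IZR_le; lia).

Qed.

Lemma boxZ_sym L1 L2 T K : boxZ L1 L2 T K -> boxZ L2 L1 T K.
Proof. unfold boxZ. lia. Qed.

Lemma tau_inside_box n L1 L2 T K : (1 <= n)%nat ->
  inA n L1 -> inA n L2 -> inA n T -> inA n K -> boxZ L1 L2 T K ->
  inside (tau n L1) (tau n L2) (tau n T) (tau n K).
Proof.
  intros Hn H1 H2 H3 Hk Hb.
  destruct (Z.lt_ge_cases (fst L1) (fst L2)) as [L|L].
  - apply tau_inside_core; auto.
  - apply inside_swap. apply tau_inside_core; auto.
    + apply boxZ_sym; auto.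
    + destruct Hb as [_ Hx]. lia.
Qed.

Lemma tau_inside n P1 P2 P3 K : (1 <= n)%nat ->
  inA n P1 -> inA n P2 -> inA n P3 -> inA n K -> InBoxZ P1 P2 P3 K ->
  inside (tau n P1) (tau n P2) (tau n P3) (tau n K).
Proof.
  intros Hn H1 H2 H3 Hk [Hb|[Hb|Hb]].
  - apply tau_inside_box; auto.
  - apply inside_cyc. apply inside_cyc. apply tau_inside_box; auto.
  - apply inside_cyc. apply inside_swap. apply tau_inside_box; auto.
Qed.

Lemma tau_nondeg n P1 P2 P3 : (1 <= n)%nat ->
  inA n P1 -> inA n P2 -> inA n P3 -> (Z.max (snd P1) (snd P2) < snd P3)%Z ->
  fst P1 <> fst P2 -> o (tau n P1) (tau n P2) (tau n P3) <> 0.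
Proof.
  intros Hn H1 H2 H3 Hy Hx.
  destruct (Z.lt_ge_cases (fst P1) (fst P2)) as [L|L].
  - pose proof (tau_nondeg_core n P1 P2 P3 Hn H1 H2 H3 Hy L). lra.
  - pose proof (tau_nondeg_core n P2 P1 P3 Hn H2 H1 H3 ltac:(lia) ltac:(lia)).
    rewrite o_swap. lra.
Qed.

Open Scope Z_scope.

Definition GridOK (d e : Z) (P1 P2 P3 : Z * Z) (i0 i1 j0 j1 : Z) : Prop :=
  forall i j, i0 <= i < i1 -> j0 <= j < j1 -> InBoxZ P1 P2 P3 (d * i, e * j).

Fixpoint PlacedZ (t : stack) (a b c k : nat) (h : nat -> Z * Z) : Prop :=
  match t with
  | Leaf => True
  | Node t1 t2 t3 =>
      InBoxZ (h a) (h b) (h c) (h k) /\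
      PlacedZ t1 a b k (k + 1) h /\ PlacedZ t2 b c k (k + 1 + nins t1) h /\
      PlacedZ t3 a c k (k + 1 + nins t1 + nins t2) h
  end.

Lemma PlacedZ_ext t : forall a b c k h h',
  (forall w, VS t a b c k w -> h w = h' w) -> PlacedZ t a b c k h -> PlacedZ t a b c k h'.
Proof.
  induction t as [|t1 IH1 t2 IH2 t3 IH3]; intros a b c k h h' E HP; simpl in *; auto.
  destruct HP as [B [P1 [P2 P3]]].
  unfold VS in E; simpl in E.
  split; [|split; [|split]].
  - rewrite <- !E by lia. auto.
  - apply (IH1 _ _ _ _ h); auto. intros w Hw. unfold VS in Hw. apply E. lia.
  - apply (IH2 _ _ _ _ h); auto. intros w Hw. unfold VS in Hw. apply E. lia.
  - apply (IH3 _ _ _ _ h); auto. intros w Hw. unfold VS in Hw. apply E. lia.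
Qed.

Definition Ex (t : stack) (a b c k : nat) (h0 : nat -> Z * Z) (d e i0 i1 j0 j1 : Z) : Prop :=
  exists h, (forall w, ~ (k <= w < k + nins t)%nat -> h w = h0 w) /\
    (forall w, (k <= w < k + nins t)%nat -> exists i j, i0 <= i < i1 /\ j0 <= j < j1 /\
        h w = (d * i, e * j)) /\
    PlacedZ t a b c k h.

Definition PEx (d e : Z) (t : stack) : Prop :=
  forall a b c k h0 i0 i1 j0 j1, (a < k)%nat -> (b < k)%nat -> (c < k)%nat ->
    GridOK d e (h0 a) (h0 b) (h0 c) i0 i1 j0 j1 ->
    Z.of_nat (nins t) <= i1 - i0 -> Z.of_nat (nins t) <= j1 - j0 ->
    Ex t a b c k h0 d e i0 i1 j0 j1.

Lemma node_step d e t1 t2 t3 a b c k h0 i0 i1 j0 j1 iK jK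
  u01 u11 v01 v11 u02 u12 v02 v12 u03 u13 v03 v13 :
  PEx d e t1 -> PEx d e t2 -> PEx d e t3 ->
  (a < k)%nat -> (b < k)%nat -> (c < k)%nat ->
  GridOK d e (h0 a) (h0 b) (h0 c) i0 i1 j0 j1 ->
  i0 <= iK < i1 -> j0 <= jK < j1 ->
  i0 <= u01 -> u11 <= i1 -> j0 <= v01 -> v11 <= j1 ->
  i0 <= u02 -> u12 <= i1 -> j0 <= v02 -> v12 <= j1 ->
  i0 <= u03 -> u13 <= i1 -> j0 <= v03 -> v13 <= j1 ->
  GridOK d e (h0 a) (h0 b) (d * iK, e * jK) u01 u11 v01 v11 ->
  GridOK d e (h0 b) (h0 c) (d * iK, e * jK) u02 u12 v02 v12 ->
  GridOK d e (h0 a) (h0 c) (d * iK, e * jK) u03 u13 v03 v13 ->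
  Z.of_nat (nins t1) <= u11 - u01 -> Z.of_nat (nins t1) <= v11 - v01 ->
  Z.of_nat (nins t2) <= u12 - u02 -> Z.of_nat (nins t2) <= v12 - v02 ->
  Z.of_nat (nins t3) <= u13 - u03 -> Z.of_nat (nins t3) <= v13 - v03 ->
  Ex (Node t1 t2 t3) a b c k h0 d e i0 i1 j0 j1.
Proof.
  intros IH1 IH2 IH3 Ha Hb Hc HG HiK HjK s1 s2 s3 s4 s5 s6 s7 s8 s9 s10 s11 s12 G1 G2 G3
    z1 z2 z3 z4 z5 z6.
  set (K := (d * iK, e * jK)) in *.
  set (h1 := fun w => if Nat.eqb w k then K else h0 w).
  assert (E1 : forall w, w <> k -> h1 w = h0 w).
  { intros w Hw. unfold h1. apply Nat.eqb_neq in Hw. rewrite Hw. auto. }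
  assert (E1k : h1 k = K) by (unfold h1; rewrite Nat.eqb_refl; auto).
  destruct (IH1 a b k (k+1)%nat h1 u01 u11 v01 v11 ltac:(lia) ltac:(lia) ltac:(lia))
    as [h2 [O2 [R2 P2]]]; auto.
  { rewrite E1k, !E1 by lia. auto. }
  destruct (IH2 b c k (k+1+nins t1)%nat h2 u02 u12 v02 v12 ltac:(lia) ltac:(lia) ltac:(lia))
    as [h3 [O3 [R3 P3]]]; auto.
  { rewrite !O2 by lia. rewrite E1k, !E1 by lia. auto. }
  destruct (IH3 a c k (k+1+nins t1+nins t2)%nat h3 u03 u13 v03 v13 ltac:(lia) ltac:(lia) ltac:(lia))
    as [h4 [O4 [R4 P4]]]; auto.
  { rewrite !O3 by lia. rewrite !O2 by lia. rewrite E1k, !E1 by lia. auto. }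
  exists h4. simpl. split; [|split].
  - intros w Hw. rewrite O4, O3, O2, E1 by lia. auto.
  - intros w Hw.
    destruct (Nat.eq_dec w k) as [->|Nk].
    { rewrite O4, O3, O2, E1k by lia. exists iK, jK. auto. }
    destruct (le_lt_dec (k + 1 + nins t1) w) as [L1|L1].
    + destruct (le_lt_dec (k + 1 + nins t1 + nins t2) w) as [L2|L2].
      * destruct (R4 w ltac:(lia)) as [i [j [Hi [Hj Ew]]]]. exists i, j. split; [lia|split; [lia|auto]].
      * destruct (R3 w ltac:(lia)) as [i [j [Hi [Hj Ew]]]]. exists i, j. split; [lia|split; [lia|]].
        rewrite O4 by lia. auto.
    + destruct (R2 w ltac:(lia)) as [i [j [Hi [Hj Ew]]]]. exists i, j. split; [lia|split; [lia|]].
      rewrite O4, O3 by lia. auto.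
  - split; [|split; [|split]].
    + rewrite O4, O3, O2, E1 by lia. rewrite O4, O3, O2, E1 by lia.
      rewrite O4, O3, O2, E1 by lia. rewrite O4, O3, O2, E1k by lia.
      apply HG; lia.
    + apply (PlacedZ_ext _ _ _ _ _ h2); auto. intros w Hw. unfold VS in Hw.
      rewrite O4, O3 by lia. auto.
    + apply (PlacedZ_ext _ _ _ _ _ h3); auto. intros w Hw. unfold VS in Hw.
      rewrite O4 by lia. auto.
    + auto.
Qed.

Open Scope Z_scope.

Lemma same_c P1 P2 P3 R Q : boxZ P1 P2 P3 R -> InBoxZ P1 P2 P3 Q -> boxZ P1 P2 P3 Q.
Proof. unfold InBoxZ, boxZ. intros H [B|[B|B]]; auto; exfalso; lia. Qed.
Lemma same_a P1 P2 P3 R Q : boxZ P2 P3 P1 R -> InBoxZ P1 P2 P3 Q -> boxZ P2 P3 P1 Q.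
Proof. unfold InBoxZ, boxZ. intros H [B|[B|B]]; auto; exfalso; lia. Qed.
Lemma same_b P1 P2 P3 R Q : boxZ P1 P3 P2 R -> InBoxZ P1 P2 P3 Q -> boxZ P1 P3 P2 Q.
Proof. unfold InBoxZ, boxZ. intros H [B|[B|B]]; auto; exfalso; lia. Qed.

Lemma mono d i i' : 0 < d -> i < i' -> d * i < d * i'.
Proof. intros. apply Z.mul_lt_mono_pos_l; auto. Qed.

Ltac solve_box := unfold boxZ; cbn [fst snd]; lia.

Ltac grid_ok d e same H0 HG iK jK :=
  let i := fresh "i" in let j := fresh "j" in
  let Hi := fresh "Hi" in let Hj := fresh "Hj" in
  intros i j Hi Hj;
  let HQ := fresh "HQ" in let HKK := fresh "HKK" in
  pose proof (same _ _ _ _ _ H0 (HG i j ltac:(lia) ltac:(lia))) as HQ;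
  pose proof (same _ _ _ _ _ H0 (HG iK jK ltac:(lia) ltac:(lia))) as HKK;
  try (let T := fresh in assert (T : d * i < d * iK) by (apply mono; lia));
  try (let T := fresh in assert (T : d * iK < d * i) by (apply mono; lia));
  try (let T := fresh in assert (T : e * j < e * jK) by (apply mono; lia));
  try (let T := fresh in assert (T : e * jK < e * j) by (apply mono; lia));
  unfold boxZ in H0, HQ, HKK; cbn [fst snd] in *;
  unfold InBoxZ;
  first [ left; solve_box | right; left; solve_box | right; right; solve_box ].

Lemma exist_place d e : 0 < d -> 0 < e -> forall t, PEx d e t.
Proof.
  intros Hd He t.
  induction t as [|t1 IH1 t2 IH2 t3 IH3]; intros a b c k h0 i0 i1 j0 j1 Ha Hb Hc HG Si Sj.
  - exists h0. simpl. split; [auto|split]; [intros; lia|auto].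
  - simpl in Si, Sj.
    set (n1 := Z.of_nat (nins t1)) in *. set (n2 := Z.of_nat (nins t2)) in *.
    set (n3 := Z.of_nat (nins t3)) in *.
    assert (N1 : 0 <= n1) by lia. assert (N2 : 0 <= n2) by lia. assert (N3 : 0 <= n3) by lia.
    pose proof (HG i0 j0 ltac:(lia) ltac:(lia)) as H0.
    destruct H0 as [H0|[H0|H0]].
    + (* top c, bottom t1 *)
      destruct (Z.lt_ge_cases (fst (h0 a)) (fst (h0 b))) as [X|X].
      * apply (node_step d e t1 t2 t3 a b c k h0 i0 i1 j0 j1 (i0 + n3) (j0 + n1)
                 i0 i1 j0 (j0 + n1) (i0 + n3 + 1) i1 (j0 + n1 + 1) j1 i0 (i0 + n3) (j0 + n1 + 1) j1);
          auto; try lia.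
        all: grid_ok d e same_c H0 HG (i0 + n3) (j0 + n1).
      * apply (node_step d e t1 t2 t3 a b c k h0 i0 i1 j0 j1 (i0 + n2) (j0 + n1)
                 i0 i1 j0 (j0 + n1) i0 (i0 + n2) (j0 + n1 + 1) j1 (i0 + n2 + 1) i1 (j0 + n1 + 1) j1);
          auto; try lia.
        all: grid_ok d e same_c H0 HG (i0 + n2) (j0 + n1).
    + (* top a, bottom t2 *)
      destruct (Z.lt_ge_cases (fst (h0 b)) (fst (h0 c))) as [X|X].
      * apply (node_step d e t1 t2 t3 a b c k h0 i0 i1 j0 j1 (i0 + n1) (j0 + n2)
                 i0 (i0 + n1) (j0 + n2 + 1) j1 i0 i1 j0 (j0 + n2) (i0 + n1 + 1) i1 (j0 + n2 + 1) j1);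
          auto; try lia.
        all: grid_ok d e same_a H0 HG (i0 + n1) (j0 + n2).
      * apply (node_step d e t1 t2 t3 a b c k h0 i0 i1 j0 j1 (i0 + n3) (j0 + n2)
                 (i0 + n3 + 1) i1 (j0 + n2 + 1) j1 i0 i1 j0 (j0 + n2) i0 (i0 + n3) (j0 + n2 + 1) j1);
          auto; try lia.
        all: grid_ok d e same_a H0 HG (i0 + n3) (j0 + n2).
    + (* top b, bottom t3 *)
      destruct (Z.lt_ge_cases (fst (h0 a)) (fst (h0 c))) as [X|X].
      * apply (node_step d e t1 t2 t3 a b c k h0 i0 i1 j0 j1 (i0 + n1) (j0 + n3)
                 i0 (i0 + n1) (j0 + n3 + 1) j1 (i0 + n1 + 1) i1 (j0 + n3 + 1) j1 i0 i1 j0 (j0 + n3));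
          auto; try lia.
        all: grid_ok d e same_b H0 HG (i0 + n1) (j0 + n3).
      * apply (node_step d e t1 t2 t3 a b c k h0 i0 i1 j0 j1 (i0 + n2) (j0 + n3)
                 (i0 + n2 + 1) i1 (j0 + n3 + 1) j1 i0 (i0 + n2) (j0 + n3 + 1) j1 i0 i1 j0 (j0 + n3));
          auto; try lia.
        all: grid_ok d e same_b H0 HG (i0 + n2) (j0 + n3).
Qed.

Open Scope R_scope.

Lemma PlacedZ_Placed n t : forall a b c k h, (1 <= n)%nat -> PlacedZ t a b c k h ->
  (forall w, VS t a b c k w -> inA n (h w)) -> Placed t a b c k (fun w => tau n (h w)).
Proof.
  induction t as [|t1 IH1 t2 IH2 t3 IH3]; intros a b c k h Hn HP HA; simpl in *; auto.
  destruct HP as [B [P1 [P2 P3]]]. unfold VS in HA; simpl in HA.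
  split; [|split; [|split]].
  - apply tau_inside; auto; apply HA; lia.
  - apply IH1; auto. intros w Hw; unfold VS in Hw; apply HA; lia.
  - apply IH2; auto. intros w Hw; unfold VS in Hw; apply HA; lia.
  - apply IH3; auto. intros w Hw; unfold VS in Hw; apply HA; lia.
Qed.

Lemma find_a (P : nat -> Prop) q : P 0%nat -> ~ P q -> exists a, (a < q)%nat /\ P a /\ ~ P (S a).
Proof.
  induction q as [|q IH]; intros H0 Hq; [contradiction|].
  destruct (classic (P q)) as [Hp|Hp].
  - exists q. split; [lia|auto].
  - destruct (IH H0 Hp) as [a [Ha1 Ha2]]. exists a. split; [lia|auto].
Qed.

Lemma choose_a q (s m w h : R) : 0 <= s <= m -> s < w -> s < h -> 0 < w -> 0 < h ->
  w * h > 8 * m ^ 2 * 2 ^ q ->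
  exists a, (a <= q)%nat /\ 2 ^ a * s < w /\ 2 ^ (q - a) * s < h.
Proof.
  intros Hs Hw Hh Pw Ph Ha.
  destruct (classic (2 ^ q * s < w)) as [Hq|Hq].
  { exists q. split; [lia|]. split; auto. rewrite Nat.sub_diag. simpl. lra. }
  destruct (find_a (fun a => 2 ^ a * s < w) q ltac:(simpl; lra) Hq) as [a [Haq [Pa Na]]].
  exists a. split; [lia|]. split; auto.
  apply Rnot_le_lt. intro Hle. apply Rnot_lt_le in Na.
  assert (E : 2 ^ S a * 2 ^ (q - a) = 2 * 2 ^ q).
  { rewrite <- pow_add. replace (S a + (q - a))%nat with (S q) by lia. simpl. ring. }
  assert (P1 : 0 < 2 ^ S a) by (apply pow_lt; lra).
  assert (P2 : 0 < 2 ^ (q - a)) by (apply pow_lt; lra).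
  assert (P3 : 0 < 2 ^ q) by (apply pow_lt; lra).
  assert (w * h <= (2 ^ S a * s) * (2 ^ (q - a) * s)).
  { apply Rmult_le_compat; lra. }
  assert ((2 ^ S a * s) * (2 ^ (q - a) * s) = 2 * 2 ^ q * (s * s)).
  { rewrite <- E. ring. }
  assert (s * s <= m * m) by nra.
  assert (2 * 2 ^ q * (s * s) <= 2 * 2 ^ q * (m * m)) by nra.
  simpl in Ha. nra.
Qed.

Lemma grid_bounds (D x1 w : R) (dz i0 i : Z) (s : nat) :
  D = IZR dz -> 0 < D -> D * INR s < w -> i0 = up (x1 / D) ->
  (i0 <= i < i0 + Z.of_nat s)%Z -> x1 < IZR (dz * i) < x1 + w.
Proof.
  intros HD PD Hw Hi0 Hi. rewrite mult_IZR, <- HD.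
  destruct (archimed (x1 / D)) as [A1 A2]. rewrite <- Hi0 in A1, A2.
  assert (L1 : IZR i0 <= IZR i) by (apply IZR_le; lia).
  assert (L2 : IZR i + 1 <= IZR i0 + INR s).
  { rewrite INR_IZR_INZ, <- plus_IZR, <- plus_IZR. apply IZR_le. lia. }
  assert (Ex : x1 = D * (x1 / D)) by (field; lra).
  split.
  - rewrite Ex at 1. apply Rmult_lt_compat_l; lra.
  - assert (IZR i <= x1 / D + INR s) by lra.
    assert (D * IZR i <= D * (x1 / D + INR s)) by (apply Rmult_le_compat_l; lra).
    rewrite Rmult_plus_distr_l, <- Ex in H0. lra.
Qed.

Lemma box_top_Z P1 P2 P3 X Y : box_top P1 P2 P3 (IZR X, IZR Y) -> boxZ P1 P2 P3 (X, Y).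
Proof.
  intros [H [[A B] [C D]]]. cbn [fst snd] in *.
  apply lt_IZR in A, B, C, D. unfold boxZ. cbn [fst snd]. lia.
Qed.

Lemma in_box_Z P1 P2 P3 X Y : in_box P1 P2 P3 (IZR X, IZR Y) -> InBoxZ P1 P2 P3 (X, Y).
Proof.
  intros [H|[H|H]]; apply box_top_Z in H; unfold InBoxZ; auto.
Qed.

Lemma inA_box n P1 P2 P3 Q : inA n P1 -> inA n P2 -> inA n P3 -> InBoxZ P1 P2 P3 Q -> inA n Q.
Proof.
  unfold inA, InBoxZ, boxZ. destruct P1, P2, P3, Q; cbn [fst snd]. lia.
Qed.

Lemma n_pos alpha n q : (1 <= q)%nat -> Rpower (INR n) alpha = INR (2 ^ q) -> (1 <= n)%nat.
Proof.
  intros Hq Hn. destruct n; [|lia]. exfalso.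
  unfold Rpower in Hn. simpl INR in Hn.
  assert (ln 0 = 0).
  { unfold ln. case (Rlt_dec 0 0); intros r. - exfalso; exact (Rlt_irrefl 0 r). - reflexivity. }
  rewrite H, Rmult_0_r, exp_0 in Hn.
  assert (2 <= 2 ^ q)%nat.
  { replace 2%nat with (2 ^ 1)%nat at 1 by reflexivity. apply Nat.pow_le_mono_r; lia. }
  apply le_INR in H0. rewrite <- Hn in H0. simpl in H0. lra.
Qed.

Open Scope R_scope.

Lemma nondeg_root n p1 p2 p3 (r : pt) : (1 <= n)%nat -> inA n p1 -> inA n p2 -> inA n p3 ->
  in_box p1 p2 p3 r -> o (tau n p1) (tau n p2) (tau n p3) <> 0.
Proof.
  intros Hn A1 A2 A3 [H|[H|H]]; destruct H as [Ht [[X1 X2] _]];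
  pose proof (Rlt_trans _ _ _ X1 X2) as X; apply lt_IZR in X.
  - apply tau_nondeg; auto. lia.
  - pose proof (tau_nondeg n p2 p3 p1 Hn A2 A3 A1 Ht ltac:(lia)).
    rewrite o_cyc. auto.
  - pose proof (tau_nondeg n p1 p3 p2 Hn A1 A3 A2 Ht ltac:(lia)).
    pose proof (o_swap (tau n p1) (tau n p3) (tau n p2)).
    pose proof (o_cyc (tau n p3) (tau n p1) (tau n p2)).
    pose proof (o_cyc (tau n p1) (tau n p2) (tau n p3)).
    intro E. apply H. lra.
Qed.

Theorem lemma9
  (alpha : R) (n q : nat)
  (Halpha : 0 < alpha <= 1)
  (Hq : (1 <= q)%nat)
  (Hn : Rpower (INR n) alpha = INR (2 ^ q))
  (m : nat) (t : stack) (Hm : nverts t = m)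
  (p1 p2 p3 : Z * Z)
  (Hp1 : inB n (2 ^ q) p1) (Hp2 : inB n (2 ^ q) p2) (Hp3 : inB n (2 ^ q) p3)
  (Htop : has_strict_top p1 p2 p3)
  (x1 x2 y1 y2 : R)
  (HR : forall r : pt, in_open_rect x1 x2 y1 y2 r -> in_box p1 p2 p3 r)
  (Harea : (x2 - x1) * (y2 - y1) > 8 * INR m ^ 2 * Rpower (INR n) alpha)
  (Hw : x2 - x1 > 2 * INR m)
  (Hh : y2 - y1 > INR m) :
  exists pos : nat -> pt,
    straight_line_planar m (p3t_edges t) pos /\
    pos 0%nat = tau n p1 /\ pos 1%nat = tau n p2 /\ pos 2%nat = tau n p3 /\
    (forall i, (3 <= i < m)%nat ->
       exists p : Z * Z, inB n (2 ^ q) p /\ in_open_rect x1 x2 y1 y2 (IZpt p) /\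
         pos i = tau n p).
Proof.
  pose proof (n_pos alpha n q Hq Hn) as Hn1.
  rewrite Hn, pow_INR in Harea. replace (INR 2) with 2 in Harea by (simpl; lra).
  unfold nverts in Hm. set (s := nins t) in *.
  assert (HmR : INR m = 3 + INR s) by (rewrite <- Hm, plus_INR; simpl INR; try lra).
  assert (Hs0 : 0 <= INR s) by apply pos_INR.
  destruct (choose_a q (INR s) (INR m) (x2 - x1) (y2 - y1)) as [a [Haq [Ha1 Ha2]]];
    try lra.
  set (d := Z.of_nat (2 ^ a)). set (e := Z.of_nat (2 ^ (q - a))).
  assert (Dd : IZR d = 2 ^ a).
  { unfold d. rewrite <- INR_IZR_INZ, pow_INR. replace (INR 2) with 2 by (simpl; lra). reflexivity. }
  assert (De : IZR e = 2 ^ (q - a)).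
  { unfold e. rewrite <- INR_IZR_INZ, pow_INR. replace (INR 2) with 2 by (simpl; lra). reflexivity. }
  assert (dpos : (0 < d)%Z) by (apply lt_0_IZR; rewrite Dd; apply pow_lt; lra).
  assert (epos : (0 < e)%Z) by (apply lt_0_IZR; rewrite De; apply pow_lt; lra).
  set (i0 := up (x1 / IZR d)). set (j0 := up (y1 / IZR e)).
  assert (GX : forall i, (i0 <= i < i0 + Z.of_nat s)%Z -> x1 < IZR (d * i) < x2).
  { intros i Hi. pose proof (grid_bounds (IZR d) x1 (x2 - x1) d i0 i s eq_refl
      ltac:(rewrite Dd; apply pow_lt; lra) ltac:(rewrite Dd; lra) eq_refl Hi). lra. }
  assert (GY : forall j, (j0 <= j < j0 + Z.of_nat s)%Z -> y1 < IZR (e * j) < y2).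
  { intros j Hj. pose proof (grid_bounds (IZR e) y1 (y2 - y1) e j0 j s eq_refl
      ltac:(rewrite De; apply pow_lt; lra) ltac:(rewrite De; lra) eq_refl Hj). lra. }
  assert (GB : forall i j, (i0 <= i < i0 + Z.of_nat s)%Z -> (j0 <= j < j0 + Z.of_nat s)%Z ->
     InBoxZ p1 p2 p3 ((d * i)%Z, (e * j)%Z)).
  { intros i j Hi Hj. apply in_box_Z. apply HR. unfold in_open_rect. cbn [fst snd].
    specialize (GX i Hi). specialize (GY j Hj). lra. }
  assert (GP : forall i j, (i0 <= i < i0 + Z.of_nat s)%Z -> (j0 <= j < j0 + Z.of_nat s)%Z ->
     inB n (2 ^ q) ((d * i)%Z, (e * j)%Z) /\ in_open_rect x1 x2 y1 y2 (IZpt ((d * i)%Z, (e * j)%Z))).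
  { intros i j Hi Hj. split.
    - split.
      + apply (inA_box n p1 p2 p3); [apply Hp1|apply Hp2|apply Hp3|]. apply GB; auto.
      + left. cbn [fst snd]. exists (i * j)%Z.
        assert (E : Z.of_nat (2 ^ q) = (d * e)%Z).
        { unfold d, e. rewrite <- Nat2Z.inj_mul, <- Nat.pow_add_r. f_equal. f_equal. lia. }
        rewrite E. ring.
    - unfold in_open_rect, IZpt. cbn [fst snd]. split; [apply GX|apply GY]; auto. }
  set (h0 := fun w : nat => match w with 0%nat => p1 | 1%nat => p2 | _ => p3 end).
  destruct (exist_place d e dpos epos t 0%nat 1%nat 2%nat 3%nat h0 i0 (i0 + Z.of_nat s)%Z j0 (j0 + Z.of_nat s)%Z
              ltac:(lia) ltac:(lia) ltac:(lia)) as [h [HO [HRg HP]]].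
  { intros i j Hi Hj. apply GB; auto. }
  { fold s. lia. }
  { fold s. lia. }
  fold s in HO, HRg.
  assert (H0 : h 0%nat = p1) by (rewrite HO by lia; reflexivity).
  assert (H1 : h 1%nat = p2) by (rewrite HO by lia; reflexivity).
  assert (H2 : h 2%nat = p3) by (rewrite HO by lia; reflexivity).
  set (pos := fun w => tau n (h w)).
  assert (HA : forall w, VS t 0%nat 1%nat 2%nat 3%nat w -> inA n (h w)).
  { intros w [->|[->|[->|Hw']]].
    - rewrite H0. apply Hp1.
    - rewrite H1. apply Hp2.
    - rewrite H2. apply Hp3.
    - destruct (HRg w Hw') as [i [j [Hi [Hj Ew]]]]. rewrite Ew. apply (GP i j Hi Hj). }
  assert (HPl : Placed t 0%nat 1%nat 2%nat 3%nat pos) by (apply PlacedZ_Placed; auto).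
  assert (Hnd : o (pos 0%nat) (pos 1%nat) (pos 2%nat) <> 0).
  { unfold pos. rewrite H0, H1, H2.
    apply (nondeg_root n p1 p2 p3 ((x1 + x2) / 2, (y1 + y2) / 2)); auto;
      [apply Hp1|apply Hp2|apply Hp3|]. apply HR. unfold in_open_rect; cbn [fst snd]. lra. }
  pose proof (good_main t 0%nat 1%nat 2%nat 3%nat pos ltac:(lia) ltac:(lia) ltac:(lia) ltac:(lia) ltac:(lia)
                ltac:(lia) Hnd HPl) as [G1 [G2 G3]].
  assert (HE : forall x y, In (x, y) (p3t_edges t) -> EdS t 0%nat 1%nat 2%nat 3%nat x y).
  { unfold p3t_edges. intros x y [E|[E|[E|E]]].
    - inversion E; subst. apply tri_in_EdS. unfold tri; tauto.
    - inversion E; subst. apply tri_in_EdS. unfold tri; tauto.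
    - inversion E; subst. apply tri_in_EdS. unfold tri; tauto.
    - apply st_in_EdS; auto. }
  assert (HV : forall w, (w < m)%nat -> VS t 0%nat 1%nat 2%nat 3%nat w).
  { intros w Hw'. unfold VS. fold s. lia. }
  exists pos. split; [|split; [|split; [|split]]].
  - split; [|split].
    + intros i j Hi Hj. apply G1; auto.
    + intros x y w Hxy Hw' Nx Ny. apply G2; auto.
    + intros x y z w Hxy Hzw N1 N2 r Hr1 Hr2. apply (G3 x y z w); auto.
  - unfold pos. rewrite H0. auto.
  - unfold pos. rewrite H1. auto.
  - unfold pos. rewrite H2. auto.
  - intros i Hi. destruct (HRg i ltac:(lia)) as [i' [j' [Hi' [Hj' Ew]]]].
    exists ((d * i')%Z, (e * j')%Z). destruct (GP i' j' Hi' Hj') as [B Rr].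
    split; [auto|split; [auto|]]. unfold pos. rewrite Ew. auto.
Qed.
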